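(* If $S$ is a MANS-semigroup and $\mathrm{e}(S)=3$, then there exist $m,a,b,t\in\mathbb{N}$ such that $m\geq 3$, $a\geq 1$, $t\in\{2,\ldots,m-1\}$, $(t-1)(am+1)<bm+t<t(am+1)$, and $(\mathrm{m}(S),\mathrm{r}(S),\mathrm{M}(S))=(m,\ am+1,\ bm+t)$.
   Context: $\mathbb{N}=\{0,1,2,\ldots\}$. A numerical semigroup is a subset $S\subseteq\mathbb{N}$ closed under addition, containing $0$, with $\mathbb{N}\setminus S$ finite. It has a unique finite minimal system of generators $\mathrm{msg}(S)=\{n_1<\cdots<n_e\}$; $\mathrm{e}(S)=e$, $\mathrm{m}(S)=n_1$ (multiplicity), $\mathrm{r}(S)=n_2$ (ratio), $\mathrm{M}(S)=n_e$. $S$ is a MANS-semigroup if $w(1)<w(2)<\cdots<w(\mathrm{m}(S)-1)$, where $w(i)$ is the least element of $S$ congruent to $i$ modulo $\mathrm{m}(S)$. *)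

(* Defs.v *)
From mathcomp Require Import all_boot.
Set Implicit Arguments. Unset Strict Implicit. Unset Printing Implicit Defensive.

Definition numerical_semigroup (S : nat -> Prop) : Prop :=
  S 0 /\ (forall x y, S x -> S y -> S (x + y)) /\
  (exists N, forall n, N <= n -> S n).

Inductive gen (G : seq nat) : nat -> Prop :=
| gen0 : gen G 0
| genS : forall g x, g \in G -> gen G x -> gen G (g + x).

Definition generates (S : nat -> Prop) (G : seq nat) : Prop :=
  forall x, S x <-> gen G x.

Definition is_msg (S : nat -> Prop) (s : seq nat) : Prop :=
  sorted ltn s /\ generates S s /\
  (forall G, {subset G <= s} -> generates S G -> {subset s <= G}).

Definition is_w (S : nat -> Prop) (m i x : nat) : Prop :=
  S x /\ x %% m = i %% m /\ (forall y, S y -> y %% m = i %% m -> x <= y).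

(* MANS: w(1) < w(2) < ... < w(m-1), where m = m(S). *)
Definition MANS (S : nat -> Prop) (m : nat) : Prop :=
  forall i j x y, 1 <= i -> i < j -> j <= m - 1 ->
    is_w S m i x -> is_w S m j y -> x < y.

(* Main.v *)
From Stdlib Require Import Classical_Prop.
Require Import Defs.
From mathcomp Require Import all_boot.
From mathcomp Require Import zify.

Lemma gen_in G g : g \in G -> gen G g.
Proof. by move=> Hg; rewrite -[g]addn0; apply: genS Hg (gen0 G). Qed.

Lemma gen_add G x y : gen G x -> gen G y -> gen G (x + y).
Proof.
elim=> [|g x' Hg _ IH] Hy //=. rewrite -addnA. exact: genS Hg (IH Hy).
Qed.

Lemma gen_mul G g k : g \in G -> gen G (k * g).
Proof.
move=> Hg; elim: k => [|k IH]; first exact: gen0.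
rewrite mulSn. exact: genS Hg IH.
Qed.

Lemma gen_sub G H x : {subset G <= H} -> gen G x -> gen H x.
Proof.
move=> sGH; elim=> [|g x' Hg _ IH]; [exact: gen0 | exact: genS (sGH _ Hg) IH].
Qed.

Lemma gen_small G H y : gen G y ->
  (forall g, g \in G -> g <= y -> g \in H) -> gen H y.
Proof.
elim=> [|g x Hg _ IH] HG; first exact: gen0.
apply: genS; first by apply: HG Hg _; exact: leq_addr.
apply: IH => g' Hg' le; apply: HG Hg' _; exact: leq_trans le (leq_addl _ _).
Qed.

Lemma gen2 a b y : gen [:: a; b] y -> exists p q, y = p * a + q * b.
Proof.
elim=> [|g x Hg _ [p [q ->]]]; first by exists 0, 0.
move: Hg; rewrite !inE => /orP [] /eqP ->; [exists p.+1, q | exists p, q.+1];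
  rewrite !mulSn; lia.
Qed.

Lemma gen1 a y : gen [:: a] y -> exists p, y = p * a.
Proof.
elim=> [|g x Hg _ [p ->]]; first by exists 0.
move: Hg; rewrite !inE => /eqP ->; exists p.+1; rewrite mulSn; lia.
Qed.

Lemma gen_red (S : nat -> Prop) s G : generates S s -> {subset G <= s} ->
  (forall g, g \in s -> gen G g) -> generates S G.
Proof.
move=> Hs sub Hg x; split=> [/Hs|HG]; last by apply/Hs; exact: gen_sub sub HG.
elim=> [|g x' Hg' _ IH]; first exact: gen0.
exact: gen_add (Hg _ Hg') IH.
Qed.

Lemma ex_min (P : nat -> Prop) n : P n -> exists m, P m /\ forall k, P k -> m <= k.
Proof.
elim: n {-2}n (leqnn n) => [|n IH] k Hk Pk.
  by exists k; split => // j _; lia.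
case: (classic (exists j, j < k /\ P j)) => [[j [ltj Pj]]| H].
  by apply: (IH j) => //; lia.
exists k; split => // j Pj; rewrite leqNgt; apply/negP => ltj; apply: H.
by exists j.
Qed.

Lemma in3 (P : nat -> Prop) a b c : P a -> P b -> P c ->
  forall g, g \in [:: a; b; c] -> P g.
Proof. by move=> Pa Pb Pc g; rewrite !inE => /or3P[]/eqP->. Qed.

Theorem proposition3p1 (S : nat -> Prop) (n1 n2 n3 : nat) :
  numerical_semigroup S ->
  is_msg S [:: n1; n2; n3] ->
  MANS S n1 ->
  exists m a b t : nat,
    [/\ 3 <= m, 1 <= a, 2 <= t <= m - 1,
        (t - 1) * (a * m + 1) < b * m + t < t * (a * m + 1) &
        (n1, n2, n3) = (m, a * m + 1, b * m + t)].
Proof.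
move=> [S0 [Sadd [N HN]]] [Hsort [Hgen Hmin]] Hmans.
move: Hsort => /= /and3P [lt12 lt23 _].
have contra : forall G, {subset G <= [:: n1; n2; n3]} ->
    (forall g, g \in [:: n1; n2; n3] -> gen G g) -> {subset [:: n1; n2; n3] <= G}.
  by move=> G sub H; exact: (Hmin G sub (gen_red S _ G Hgen sub H)).
have i1 : n1 \in [:: n1; n2; n3] by rewrite !inE eqxx.
have i2 : n2 \in [:: n1; n2; n3] by rewrite !inE eqxx ?orbT.
have i3 : n3 \in [:: n1; n2; n3] by rewrite !inE eqxx ?orbT.
have sub2 : forall x y, x \in [:: n1; n2; n3] -> y \in [:: n1; n2; n3] ->
    {subset [:: x; y] <= [:: n1; n2; n3]}.
  by move=> x y hx hy g; rewrite in_cons mem_seq1 => /orP[]/eqP->.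
have SG : forall x, gen [:: n1; n2; n3] x -> S x by move=> x /Hgen.
have m0 : 0 < n1.
  rewrite lt0n; apply/negP => /eqP e.
  have : n1 \in [:: n2; n3]; last by rewrite !inE => /orP[]/eqP; lia.
  apply: (contra [:: n2; n3] (sub2 _ _ i2 i3)) i1.
  by apply: in3; [rewrite e; exact: gen0 | apply: gen_in; rewrite !inE eqxx
     | apply: gen_in; rewrite !inE eqxx ?orbT].
set m := n1 in Hgen Hmin Hmans lt12 contra i1 i2 i3 sub2 SG m0 *.
have in12 : forall g, g \in [:: m; n2] -> gen [:: m; n2] g by move=> g /gen_in.
have in1 : forall g, g \in [:: m] -> gen [:: m] g by move=> g /gen_in.
have below2 : forall y, S y -> y < n2 -> y %% m = 0.
  move=> y /Hgen Hy lty.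
  have [p ep] : exists p, y = p * m.
    apply: gen1; apply: (gen_small _ _ _ Hy) => g; rewrite !inE => /or3P[]/eqP-> //;
    lia.
  by rewrite ep modnMl.
have below3 : forall y, S y -> y < n3 -> exists p q, y = p * m + q * n2.
  move=> y /Hgen Hy lty; apply: gen2; apply: (gen_small _ _ _ Hy) => g;
  rewrite !inE => /or3P[]/eqP-> //; rewrite ?eqxx ?orbT //; lia.
have n2m0 : n2 %% m != 0.
  apply/negP => /eqP e.
  have : n2 \in [:: m; n3]; last by rewrite !inE => /orP[]/eqP; lia.
  apply: (contra [:: m; n3] (sub2 _ _ i1 i3)) i2.
  apply: in3; [apply: gen_in; rewrite !inE eqxx // | | apply: gen_in; rewrite !inE eqxx ?orbT //].
  rewrite (divn_eq n2 m) e addn0; apply: gen_mul; by rewrite !inE eqxx.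
have ltm := ltn_pmod n2 m0.
have n2m1 : n2 %% m = 1.
  case: (ltngtP (n2 %% m) 1) => [|lt1|] //; first by move: n2m0; lia.
  set j := n2 %% m in lt1 ltm.
  have Sx : S (N * m + 1) by apply: HN; nia.
  have [x [[Sx1 ex] minx]] := ex_min (fun y => S y /\ y %% m = 1 %% m) _ (conj Sx (modnMDl N 1 m)).
  have wx : is_w S m 1 x by split; [|split] => // y Sy ey; exact: minx y (conj Sy ey).
  have wn2 : is_w S m j n2.
    split; first exact: SG (gen_in _ _ i2).
    split; first by rewrite modn_mod.
    move=> y Sy ey; rewrite leqNgt; apply/negP => lty.
    have := below2 y Sy lty; rewrite ey modn_mod; lia.
  have := Hmans 1 j x n2 (leqnn 1) lt1 _ wx wn2.
  move=> /(_ _) ltx; have {}ltx := ltx ltac:(lia).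
  have := below2 x Sx1 ltx; rewrite ex modn_small //; lia.
set t := n3 %% m.
have ltt := ltn_pmod n3 m0.
have t0 : t != 0.
  apply/negP => /eqP e.
  have : n3 \in [:: m; n2]; last by rewrite !inE => /orP[]/eqP; lia.
  apply: (contra [:: m; n2] (sub2 _ _ i1 i2)) i3.
  apply: in3; [apply: in12; rewrite !inE eqxx // | apply: in12; rewrite !inE eqxx ?orbT //|].
  rewrite (divn_eq n3 m) -/t e addn0; apply: gen_mul; by rewrite !inE eqxx.
have congr : forall y, y <= n3 -> y %% m = n3 %% m -> gen [:: m; n2] y -> gen [:: m; n2] n3.
  move=> y le e gy.
  have : m %| n3 - y by rewrite -eqn_mod_dvd // e.
  move=> /divnK e2.
  rewrite -(subnKC le) -e2 addnC; apply: gen_add gy.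
  by apply: gen_mul; rewrite !inE eqxx.
have nored : ~ gen [:: m; n2] n3.
  move=> g3.
  have : n3 \in [:: m; n2]; last by rewrite !inE => /orP[]/eqP; lia.
  apply: (contra [:: m; n2] (sub2 _ _ i1 i2)) i3.
  apply: in3; [apply: in12; rewrite !inE eqxx // | apply: in12; rewrite !inE eqxx ?orbT //|].
  exact: g3.
have t1 : t != 1.
  apply/negP => /eqP e; apply: nored; apply: (congr n2); [lia | by rewrite n2m1 -/t e|].
  by apply: in12; rewrite !inE eqxx ?orbT.
have wn3 : is_w S m t n3.
  split; first exact: SG (gen_in _ _ i3).
  split; first by rewrite modn_mod.
  move=> y Sy ey; rewrite leqNgt; apply/negP => lty.
  have [p [q eq]] := below3 y Sy lty.
  apply: nored; apply: (congr y); [lia | by rewrite ey modn_mod|].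
  rewrite eq; apply: gen_add; apply: gen_mul; by rewrite !inE eqxx ?orbT.
have modq : forall q, (q * n2) %% m = q %% m.
  by move=> q; rewrite -modnMmr n2m1 muln1.
have Stn2 : S (t * n2) by apply: SG; apply: gen_mul.
have upper : n3 < t * n2.
  rewrite ltn_neqAle; apply/andP; split.
    apply/negP => /eqP e; apply: nored; rewrite e; apply: gen_mul; by rewrite !inE eqxx ?orbT.
  by case: wn3 => _ [_ H]; apply: H => //; rewrite modq.
have St1 : S ((t - 1) * n2) by apply: SG; apply: gen_mul.
have [x [[Sx ex] minx]] := ex_min (fun y => S y /\ y %% m = (t - 1) %% m) _ (conj St1 (modq _)).
have wx : is_w S m (t - 1) x by split; [|split] => // y Sy ey; exact: minx y (conj Sy ey).
have ltx : x < n3 by apply: (Hmans (t - 1) t x n3) => //; lia.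
have lower : (t - 1) * n2 < n3.
  have [p [q eq]] := below3 x Sx ltx.
  have : x %% m = q %% m by rewrite eq modnMDl modq.
  rewrite ex (modn_small (_ : t - 1 < m)); last by lia.
  move=> eq2; have := leq_mod q m; rewrite -eq2 => leq.
  apply: leq_ltn_trans ltx; rewrite eq.
  apply: leq_trans (leq_addl _ _); exact: leq_mul.
have e2 := divn_eq n2 m; rewrite n2m1 in e2.
have e3 := divn_eq n3 m; rewrite -/t in e3.
exists m, (n2 %/ m), (n3 %/ m), t.
rewrite -e2 -e3; split => //; try lia.
Qed.
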